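(* Let $\mathscr{A}$ be a finite alphabet, $\Xi\subseteq\mathscr{A}^{\mathbb{Z}}$ a subshift and $(\mathscr{G}_k)_{k\in\mathbb{N}}$ its GAP-graphs. (i) If $\Xi$ contains no periodic element, then for each $m\in\mathbb{N}$ there is $k_0\in\mathbb{N}$ such that for all $k\geq k_0$ the graph $\mathscr{G}_k$ has no closed path of length smaller than or equal to $m$; in particular the graphs $\mathscr{G}_k$ are simple for all sufficiently large $k$. (ii) If $\Xi$ contains an element $\eta$ of period $m$, then every $\mathscr{G}_k$ has a closed path of length $m$. (iii) If $\Xi=\mathrm{Orb}(\eta)$ where $\eta$ is periodic with period $m$, then $\mathscr{G}_k$ has no branching vertex for $k\geq m-1$.
   Context: $\mathscr{A}^{\mathbb{Z}}$ has the product topology and shift $(T\xi)(j)=\xi(j-1)$; a subshift is a non-empty closed $T$-invariant subset. $\eta$ is periodic if $T^n\eta=\eta$ for some $n\geq1$, and its period is the least such $n$; $\mathrm{Orb}(\eta)=\{T^n\eta:n\in\mathbb{Z}\}$. $\mathcal{D}(\Xi)$ is the set of finite subwords of elements of $\Xi$. The GAP-graph $\mathscr{G}_k$ has vertex set $\mathcal{D}(\Xi)\cap\mathscr{A}^k$, edge set $\mathcal{D}(\Xi)\cap\mathscr{A}^{k+1}$, edge $e=a_0\cdots a_k$ going from $\partial_0e=a_0\cdots a_{k-1}$ to $\partial_1e=a_1\cdots a_k$. A closed path of length $m$ is $(e_1,\dots,e_m)$ with $\partial_1e_i=\partial_0e_{i+1}$ and $\partial_1e_m=\partial_0e_1$.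 A graph is simple if no edge has equal origin and end and for any two vertices there is at most one edge from the first to the second. The degree of a vertex is its number of incoming plus outgoing edges; a vertex is dandling if it has only incoming or only outgoing edges; a vertex is branching if it is not dandling and has degree $>2$. *)

(* Defs.v *)
From mathcomp Require Import all_boot all_order all_algebra.
From mathcomp Require Import boolp.
Set Implicit Arguments. Unset Strict Implicit. Unset Printing Implicit Defensive.
Import Order.TTheory GRing.Theory Num.Theory.

Section Subshift.
Variable A : finType.

Definition config := int -> A.

Definition shiftn (n : int) (xi : config) : config := fun j => xi (j - n)%R.
Definition T (xi : config) : config := shiftn 1 xi.

(* closedness in the product topology (A discrete): a configuration all of
   whose central windows [-n,n] are matched by elements of Xi lies in Xi *)
Definition closed_conf (Xi : config -> Prop) : Prop :=
  forall xi : config,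
    (forall n : nat, exists x, Xi x /\
        forall j : int, (- (n%:Z) <= j <= n%:Z)%R -> x j = xi j) ->
    Xi xi.

Definition shift_invariant (Xi : config -> Prop) : Prop :=
  (forall xi, Xi xi -> Xi (T xi)) /\
  (forall xi, Xi xi -> exists x, Xi x /\ T x = xi).

Definition subshift (Xi : config -> Prop) : Prop :=
  (exists xi, Xi xi) /\ closed_conf Xi /\ shift_invariant Xi.

Definition is_periodic (eta : config) : Prop :=
  exists n : nat, (0 < n)%N /\ iter n T eta = eta.

Definition has_period (eta : config) (m : nat) : Prop :=
  (0 < m)%N /\ iter m T eta = eta /\
  forall n : nat, (0 < n)%N -> iter n T eta = eta -> (m <= n)%N.

Definition Orb (eta : config) : config -> Prop :=
  fun xi => exists n : int, xi = shiftn n eta.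

Definition subword_at (xi : config) (i : int) (len : nat) : seq A :=
  [seq xi (i + j%:Z)%R | j <- iota 0 len].

Definition inD (Xi : config -> Prop) (w : seq A) : Prop :=
  exists xi i, Xi xi /\ w = subword_at xi i (size w).

Definition vertex (Xi : config -> Prop) (k : nat) (v : seq A) : Prop :=
  size v = k /\ inD Xi v.
Definition edge (Xi : config -> Prop) (k : nat) (e : seq A) : Prop :=
  size e = k.+1 /\ inD Xi e.
Definition d0 (e : seq A) : seq A := take (size e).-1 e.
Definition d1 (e : seq A) : seq A := behead e.

(* closed path (e_1,...,e_m), m >= 1, indexed 0..m-1 *)
Definition closed_path (Xi : config -> Prop) (k : nat) (p : seq (seq A)) : Prop :=
  (0 < size p)%N /\ (forall e, e \in p -> edge Xi k e) /\
  forall i, (i < size p)%N ->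
    d1 (nth [::] p i) = d0 (nth [::] p (i.+1 %% size p)).

Definition has_closed_path (Xi : config -> Prop) (k m : nat) : Prop :=
  exists p, size p = m /\ closed_path Xi k p.

Definition simple_graph (Xi : config -> Prop) (k : nat) : Prop :=
  (forall e, edge Xi k e -> d0 e <> d1 e) /\
  (forall e e', edge Xi k e -> edge Xi k e' ->
     d0 e = d0 e' -> d1 e = d1 e' -> e = e').

(* edges of G_k are the words of length k+1, counted via tuples *)
Definition in_deg (Xi : config -> Prop) (k : nat) (v : seq A) : nat :=
  #|[set e : k.+1.-tuple A | `[< edge Xi k (tval e) >] && (d1 (tval e) == v)]|.
Definition out_deg (Xi : config -> Prop) (k : nat) (v : seq A) : nat :=
  #|[set e : k.+1.-tuple A | `[< edge Xi k (tval e) >] && (d0 (tval e) == v)]|.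
Definition degree Xi k v := (in_deg Xi k v + out_deg Xi k v)%N.

Definition dandling (Xi : config -> Prop) (k : nat) (v : seq A) : Prop :=
  in_deg Xi k v = 0%N \/ out_deg Xi k v = 0%N.

Definition branching (Xi : config -> Prop) (k : nat) (v : seq A) : Prop :=
  vertex Xi k v /\ ~ dandling Xi k v /\ (2 < degree Xi k v)%N.

End Subshift.

(* Main.v *)
Require Import Defs.
From mathcomp Require Import all_boot all_order all_algebra.
From mathcomp Require Import boolp zify.
Set Implicit Arguments. Unset Strict Implicit. Unset Printing Implicit Defensive.
Import Order.TTheory GRing.Theory Num.Theory.

Section Helpers.
Variable A : finType.
Implicit Types (xi eta : config A) (i z : int).

Lemma shiftn_comp (a b : int) xi : shiftn a (shiftn b xi) = shiftn (a + b)%R xi.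
Proof. by apply: funext => j; rewrite /shiftn opprD addrA. Qed.

Lemma iterT n xi : iter n (@T A) xi = shiftn n%:Z xi.
Proof.
elim: n => [|n IH]; first by apply: funext => j; rewrite /shiftn subr0.
by rewrite iterS IH /T shiftn_comp -addn1 PoszD addrC.
Qed.

Lemma size_subword xi i n : size (subword_at xi i n) = n.
Proof. by rewrite /subword_at size_map size_iota. Qed.

Lemma nth_subword a0 xi i n t : (t < n)%N ->
  nth a0 (subword_at xi i n) t = xi (i + t%:Z)%R.
Proof. by move=> ht; rewrite /subword_at (nth_map 0%N) ?size_iota // nth_iota. Qed.

Lemma subword_ext (x y : config A) i i' n :
  (forall t, (t < n)%N -> x (i + t%:Z)%R = y (i' + t%:Z)%R) ->
  subword_at x i n = subword_at y i' n.
Proof.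
move=> H; apply/eq_in_map => t; rewrite mem_iota add0n => /andP[_ ht]; exact: H.
Qed.

Lemma subword_take xi i n : take n (subword_at xi i n.+1) = subword_at xi i n.
Proof.
by rewrite /subword_at -addn1 iotaD map_cat take_size_cat // size_map size_iota.
Qed.

Lemma d0_subword xi i n : d0 (subword_at xi i n.+1) = subword_at xi i n.
Proof. by rewrite /d0 size_subword /= subword_take. Qed.

Lemma d1_subword xi i n : d1 (subword_at xi i n.+1) = subword_at xi (i + 1)%R n.
Proof.
rewrite /d1 /subword_at /= -add1n iotaDl -map_comp; apply: eq_map => t /=.
by rewrite PoszD addrA.
Qed.

Lemma subword_shift z xi i n : subword_at (shiftn z xi) i n = subword_at xi (i - z)%R n.
Proof. by apply: subword_ext => t _; rewrite /shiftn addrAC. Qed.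


Lemma shiftn0 xi : shiftn 0 xi = xi.
Proof. by apply: funext => j; rewrite /shiftn subr0. Qed.

Lemma Xi_shift (Xi : config A -> Prop) : shift_invariant Xi ->
  forall xi z, Xi xi -> Xi (shiftn z xi).
Proof.
move=> [hf hb] xi z hx.
have pos n : Xi (shiftn n%:Z xi).
  elim: n => [|n IH]; first by rewrite shiftn0.
  by have := hf _ IH; rewrite /T shiftn_comp -addn1 PoszD addrC.
have neg1 y : Xi y -> Xi (shiftn (-1) y).
  move=> /hb [x [hx' <-]]; by rewrite /T shiftn_comp addNr shiftn0.
have neg n : Xi (shiftn (- n%:Z) xi).
  elim: n => [|n IH]; first by rewrite oppr0 shiftn0.
  by have := neg1 _ IH; rewrite shiftn_comp -addn1 PoszD opprD addrC.
by case: z => n; [apply: pos | rewrite NegzE; apply: neg].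
Qed.

Lemma period_eq eta m : iter m (@T A) eta = eta -> forall j, eta (j + m%:Z)%R = eta j.
Proof.
rewrite iterT => h j; have := congr1 (fun f => f (j + m%:Z)%R) h.
by rewrite /shiftn addrK => <-.
Qed.

Lemma part2 (Xi : config A -> Prop) eta m : Xi eta -> has_period eta m ->
  forall k, has_closed_path Xi k m.
Proof.
move=> hX [m0 [hm _]] k; have per := period_eq hm.
exists [seq subword_at eta (n%:Z) k.+1 | n <- iota 0 m].
split; first by rewrite size_map size_iota.
split; first by rewrite size_map size_iota.
split.
  move=> e /mapP [i _ ->]; split; first exact: size_subword.
  by exists eta, (Posz i); rewrite size_subword.
move=> i; rewrite size_map size_iota => hi.
rewrite !(nth_map 0%N) ?size_iota ?ltn_pmod // !nth_iota ?ltn_pmod // !add0n.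
rewrite d1_subword d0_subword.
have [hlt|hge] := ltnP i.+1 m.
  by rewrite modn_small // -addn1 PoszD.
have e : i.+1 = m by apply/eqP; rewrite eqn_leq hi hge.
rewrite e modnn; have -> : (Posz i + 1)%R = Posz m by rewrite -e -addn1 PoszD.
by apply: subword_ext => t _; rewrite add0r addrC per.
Qed.

Lemma not_uniq_map (T1 T2 : eqType) (f : T1 -> T2) (s : seq T1) x y :
  x \in s -> y \in s -> x != y -> f x = f y -> ~~ uniq (map f s).
Proof.
elim: s => [//|z s IH] /=; rewrite !inE => hx hy hxy hf.
apply/negP => /andP[hn hu].
case/orP: hx => [/eqP ex|hx]; case/orP: hy => [/eqP ey|hy].
- by rewrite ex ey eqxx in hxy.
- by move/negP: hn; apply; rewrite -ex hf map_f.
- by move/negP: hn; apply; rewrite -ey -hf map_f.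
- by move/negP: (IH hx hy hxy hf).
Qed.

Lemma count_lt (T1 T2 : eqType) (f : T1 -> T2) (s : seq T1) (t : seq T2) x y :
  uniq t -> {subset t <= map f s} ->
  x \in s -> y \in s -> x != y -> f x = f y -> (size t < size s)%N.
Proof.
move=> ut sub hx hy hxy hf.
have h1 : (size t <= size (undup (map f s)))%N.
  by apply: uniq_leq_size => // w /sub; rewrite mem_undup.
have h2 : (size (undup (map f s)) < size (map f s))%N.
  by rewrite ltn_size_undup (not_uniq_map hx hy hxy hf).
by rewrite size_map in h2; apply: leq_ltn_trans h2.
Qed.

Section Part3.
Variables (eta : config A) (m : nat).
Hypothesis m0 : (0 < m)%N.
Hypothesis hm : iter m (@T A) eta = eta.

Lemma perN (n : nat) j : eta (j + (n * m)%N%:Z)%R = eta j.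
Proof.
have per := period_eq hm.
elim: n j => [|n IH] j; first by rewrite mul0n addr0.
by rewrite mulSn PoszD addrA IH per.
Qed.

Lemma perZ (q : int) j : eta (j + q * m%:Z)%R = eta j.
Proof.
case: q => n; first by rewrite -PoszM perN.
rewrite -(perN n.+1 (j + Negz n * m%:Z)%R); congr eta; lia.
Qed.

Definition W n := undup [seq subword_at eta (Posz j) n | j <- iota 0 m].

Lemma W_size n : (size (W n) <= m)%N.
Proof. by rewrite /W (leq_trans (size_undup _)) // size_map size_iota. Qed.

Lemma W_mem i n : subword_at eta i n \in W n.
Proof.
rewrite /W mem_undup; apply/mapP; exists (absz (modz i m%:Z)).
  rewrite mem_iota; lia.
apply: subword_ext => t _.
rewrite -[in LHS](perZ (- divz i m%:Z)); congr eta; lia.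
Qed.

Lemma W_lt n (f : seq A -> seq A) p1 p2 :
  (forall i, exists i', f (subword_at eta i' n.+1) = subword_at eta i n) ->
  subword_at eta p1 n.+1 != subword_at eta p2 n.+1 ->
  f (subword_at eta p1 n.+1) = f (subword_at eta p2 n.+1) ->
  (size (W n) < size (W n.+1))%N.
Proof.
move=> hf hne heq; apply: (count_lt (f := f) _ _ (W_mem p1 _) (W_mem p2 _) hne heq).
  exact: undup_uniq.
move=> w; rewrite mem_undup => /mapP [j _ ->].
have [i' <-] := hf (Posz j); exact/map_f/W_mem.
Qed.

Variable k : nat.
Hypothesis hk : (m - 1 <= k)%N.

Lemma W_grow : (forall n, (n <= k)%N -> (size (W n) < size (W n.+1))%N) -> False.
Proof.
move=> H.
have h : forall n, (n <= k.+1)%N -> (n < size (W n))%N.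
  elim=> [_|n IH hn].
    by case: (W 0) (W_mem 0 0) => [|? ?].
  by apply: leq_ltn_trans (H n hn); apply: IH; apply: ltnW.
have := leq_trans (h k.+1 (leqnn _)) (W_size _).
move: hk; lia.
Qed.

Variable Xi : config A -> Prop.
Hypothesis hXi : forall xi, Xi xi <-> Orb eta xi.

Lemma edge_sub e : edge Xi k e -> exists p, e = subword_at eta p k.+1.
Proof.
move=> [hs [xi [i [hx he]]]]; move/hXi: hx => [z ez]; rewrite ez hs in he.
by exists (i - z)%R; rewrite he subword_shift.
Qed.

Lemma out_le1 v : (out_deg Xi k v <= 1)%N.
Proof.
apply/card_le1_eqP => e1 e2; rewrite !inE => /andP[/asboolP h1 /eqP d1] /andP[/asboolP h2 /eqP d2].
apply/val_inj; case: (eqVneq (tval e1) (tval e2)) => // hne; exfalso.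
have [p1 ep1] := edge_sub h1; have [p2 ep2] := edge_sub h2.
rewrite ep1 ep2 in hne; rewrite ep1 d0_subword in d1; rewrite ep2 d0_subword in d2.
have a0 := eta 0.
have hpre t : (t < k)%N -> eta (p1 + t%:Z)%R = eta (p2 + t%:Z)%R.
  move=> ht; have := congr1 (fun w => nth a0 w t) (etrans d1 (esym d2)).
  by rewrite /= !nth_subword.
have hlast : eta (p1 + k%:Z)%R != eta (p2 + k%:Z)%R.
  apply/negP => /eqP hl; move/negP: hne; apply; apply/eqP; apply: subword_ext => t.
  rewrite ltnS leq_eqVlt => /orP[/eqP -> //|]; exact: hpre.
apply: W_grow => n hn.
apply: (W_lt (f := take n) (p1 := (p1 + (k - n)%N%:Z)%R) (p2 := (p2 + (k - n)%N%:Z)%R)).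
- by move=> i; exists i; rewrite subword_take.
- apply/negP => /eqP h; have := congr1 (fun w => nth a0 w n) h.
  rewrite /= !nth_subword // -!addrA -!PoszD subnK //; exact/eqP.
- rewrite !subword_take; apply: subword_ext => t ht; rewrite -!addrA -!PoszD; apply: hpre; lia.
Qed.


Lemma in_le1 v : (in_deg Xi k v <= 1)%N.
Proof.
apply/card_le1_eqP => e1 e2; rewrite !inE => /andP[/asboolP h1 /eqP hd1] /andP[/asboolP h2 /eqP hd2].
apply/val_inj; case: (eqVneq (tval e1) (tval e2)) => // hne; exfalso.
have [p1 ep1] := edge_sub h1; have [p2 ep2] := edge_sub h2.
rewrite ep1 ep2 in hne; rewrite ep1 d1_subword in hd1; rewrite ep2 d1_subword in hd2.
have a0 := eta 0.
have hpre t : (t < k)%N -> eta (p1 + 1 + t%:Z)%R = eta (p2 + 1 + t%:Z)%R.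
  move=> ht; have := congr1 (fun w => nth a0 w t) (etrans hd1 (esym hd2)).
  by rewrite /= !nth_subword.
have hfirst : eta p1 != eta p2.
  apply/negP => /eqP hl; move/negP: hne; apply; apply/eqP; apply: subword_ext => t.
  case: t => [_|t ht]; first by rewrite !addr0.
  rewrite (_ : (p1 + Posz t.+1)%R = (p1 + 1 + Posz t)%R); last lia.
  rewrite (_ : (p2 + Posz t.+1)%R = (p2 + 1 + Posz t)%R); last lia.
  by apply: hpre.
apply: W_grow => n hn.
apply: (W_lt (f := @d1 A) (p1 := p1) (p2 := p2)).
- by move=> i; exists (i - 1)%R; rewrite d1_subword subrK.
- apply/negP => /eqP h; have := congr1 (nth a0 ^~ 0%N) h.
  rewrite !nth_subword // !addr0; exact/eqP.
- rewrite !d1_subword; apply: subword_ext => t ht; apply: hpre; lia.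
Qed.

Lemma no_branching v : ~ branching Xi k v.
Proof.
move=> [_ [_ hdeg]]; move: hdeg; rewrite /degree.
have := in_le1 v; have := out_le1 v; lia.
Qed.

End Part3.

Lemma cp_period (Xi : config A -> Prop) k l : has_closed_path Xi k l ->
  (0 < l)%N /\ exists xi i, Xi xi /\
    forall t, (t + l <= k)%N -> xi (i + (t + l)%N%:Z)%R = xi (i + t%:Z)%R.
Proof.
move=> [p [hs [l0 [hE hc]]]]; rewrite hs in l0 hc; split=> //.
pose E t := nth [::] p (t %% l).
have Eedge t : edge Xi k (E t) by apply: hE; rewrite mem_nth // hs ltn_pmod.
have [xi0 _] : exists xi : config A, True.
  by have [_ [xi _]] := Eedge 0%N; exists xi.
pose a0 := xi0 0.
have step t j : (j < k)%N -> nth a0 (E t) j.+1 = nth a0 (E t.+1) j.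
  move=> hj; have := congr1 (nth a0 ^~ j) (hc _ (ltn_pmod t l0)).
  have em : (t %% l).+1 %% l = t.+1 %% l by rewrite -addn1 modnDml addn1.
  rewrite /d1 /d0 nth_behead em -/(E t) -/(E t.+1) => ->.
  by rewrite (Eedge t.+1).1 /= nth_take.
have claim t j : (j + t <= k)%N -> nth a0 (E 0) (j + t) = nth a0 (E t) j.
  elim: t j => [|t IH] j hjt; first by rewrite addn0.
  by rewrite -addSnnS IH ?addSnnS // step //; apply: leq_trans hjt; rewrite -addSnnS leq_addr.
have [[hsz [xi [i [hx he]]]] hEl] : edge Xi k (E 0) /\ E l = E 0.
  by split=> //; rewrite /E modnn mod0n.
exists xi, i; split=> // t htl.
have ht1 : (t + l < k.+1)%N by [].
have ht2 : (t < k.+1)%N by apply: leq_ltn_trans ht1; rewrite leq_addr.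
rewrite hsz in he.
rewrite -(nth_subword a0 xi i ht1) -(nth_subword a0 xi i ht2) -he claim // hEl //.
Qed.

Lemma per_mod (xi : config A) i l L k : (0 < l)%N -> (l %| L)%N ->
  (forall t, (t + l <= k)%N -> xi (i + (t + l)%N%:Z)%R = xi (i + t%:Z)%R) ->
  forall t, (t <= k)%N -> xi (i + t%:Z)%R = xi (i + (t %% L)%N%:Z)%R.
Proof.
move=> l0 dl hp.
have h1 t : (t <= k)%N -> xi (i + t%:Z)%R = xi (i + (t %% l)%N%:Z)%R.
  elim/ltn_ind: t => t IH ht.
  have [hlt|hge] := ltnP t l; first by rewrite modn_small.
  have e : t = (t - l + l)%N by rewrite subnK.
  rewrite e hp; last by rewrite -e.
  rewrite IH ?modnDr //; last by apply: leq_trans ht; rewrite leq_subr.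
  by rewrite -subn_gt0 subKn // (leq_trans l0).
move=> t ht; rewrite (h1 t ht) (h1 (t %% L)%N); last by apply: leq_trans ht; apply: leq_mod.
by rewrite (modn_dvdm _ dl).
Qed.

Lemma part1 (Xi : config A -> Prop) : subshift Xi ->
  (~ exists eta, Xi eta /\ is_periodic eta) -> forall m,
  exists k0, forall k, (k0 <= k)%N -> forall l, (l <= m)%N -> ~ has_closed_path Xi k l.
Proof.
move=> [[xi0 _] [hcl hinv]] nop m.
pose a0 := xi0 0.
pose L := m`!.
have L0 : (0 < L)%N := fact_gt0 m.
pose P K (u : L.-tuple A) := exists xi i, Xi xi /\
  forall t, (t <= K)%N -> xi (i + t%:Z)%R = nth a0 u (t %% L).
apply: contrapT => hno.
have hall K : exists u, P K u.
  apply: contrapT => hK; apply: hno; exists K => k hk l hl hc; apply: hK.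
  have [l0 [xi [i [hx hper]]]] := cp_period hc.
  have hmod := per_mod l0 (dvdn_fact (m := l) (n := m) (introT andP (conj l0 hl))) hper.
  exists (mktuple (fun j : 'I_L => xi (i + (j : nat)%:Z)%R)), xi, i; split => // t ht.
  rewrite (hmod t (leq_trans ht hk)).
  by rewrite (nth_mktuple (fun j : 'I_L => xi (i + (j : nat)%:Z)%R) a0 (Ordinal (ltn_pmod t L0))).
have [u hu] : exists u, forall K, P K u.
  apply: contrapT => hn.
  have hg : forall u, exists K, ~ P K u.
    move=> u; apply: contrapT => h; apply: hn; exists u => K.
    by apply: contrapT => h'; apply: h; exists K.
  have [g hg'] := choice hg.
  have [u hu] := hall (\max_u g u).
  apply: (hg' u); move: hu => [xi [i [hx hh]]]; exists xi, i; split => // t ht.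
  by apply: hh; apply: leq_trans ht (leq_bigmax u).
pose zeta : config A := fun j => nth a0 u (absz (j %% (Posz L))%Z).
apply: nop; exists zeta; split.
  apply: hcl => N; have [xi [i [hx hh]]] := hu (N * L + N)%N.
  exists (shiftn (- (i + Posz (N * L)%N))%R xi); split; first exact: Xi_shift.
  move=> j /andP [hj1 hj2].
  have hNL : (N <= N * L)%N by rewrite leq_pmulr.
  have hj0 : (0 <= j + Posz (N * L)%N)%R by lia.
  pose t := absz (j + Posz (N * L)%N)%R.
  have ht : Posz t = (j + Posz (N * L)%N)%R by rewrite /t; lia.
  rewrite /shiftn (_ : (j - - (i + Posz (N * L)%N))%R = (i + Posz t)%R); last by rewrite ht; lia.
  rewrite hh; last by rewrite /t; lia.
  rewrite /zeta; congr nth.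
  have : Posz (t %% L)%N = (j %% Posz L)%Z.
    by rewrite -modz_nat ht PoszM addrC modzMDl.
  by move=> <-.
exists L; split=> //; rewrite iterT; apply: funext => j; rewrite /shiftn /zeta.
by rewrite -[in RHS](subrK (Posz L) j) modzDr.
Qed.

Lemma simple_part (Xi : config A -> Prop) k0 :
  (forall k, (k0 <= k)%N -> forall l, (l <= 1)%N -> ~ has_closed_path Xi k l) ->
  exists k1, forall k, (k1 <= k)%N -> simple_graph Xi k.
Proof.
move=> h; exists k0.+1 => k hk; split.
  move=> e he heq; apply: (h k (ltnW hk) 1%N (leqnn 1)); exists [:: e].
  split=> //; split=> //; split.
    by move=> e'; rewrite inE => /eqP ->.
  by move=> i; rewrite ltnS leqn0 => /eqP ->; rewrite modnn /= heq.
move=> e e' [hs _] [hs' _]; rewrite /d0 /d1 hs hs' /=.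
case: e hs => [//|a s] _; case: e' hs' => [//|b s'] _ /=.
case: k hk => [//|k'] _ /=.
by move=> [-> _] ->.
Qed.
End Helpers.

Theorem proposition8 (A : finType) (Xi : config A -> Prop) (hXi : subshift Xi) :
  (* (i) *)
  ((~ exists eta, Xi eta /\ is_periodic eta) ->
     (forall m : nat, exists k0 : nat, forall k : nat, (k0 <= k)%N ->
        forall l : nat, (l <= m)%N -> ~ has_closed_path Xi k l) /\
     (exists k0 : nat, forall k : nat, (k0 <= k)%N -> simple_graph Xi k)) /\
  (* (ii) *)
  (forall (eta : config A) (m : nat), Xi eta -> has_period eta m ->
     forall k : nat, has_closed_path Xi k m) /\
  (* (iii) *)
  (forall (eta : config A) (m : nat), has_period eta m ->
     (forall xi, Xi xi <-> Orb eta xi) ->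
     forall k : nat, (m - 1 <= k)%N ->
       forall v, ~ branching Xi k v).
Proof.
split.
  move=> nop; have h := part1 hXi nop; split=> //.
  by have [k0 hk0] := h 1%N; apply: simple_part hk0.
split; first by move=> eta m hx hp k; exact: (part2 hx hp k).
move=> eta m [m0 [hm _]] hO k hk v.
exact: (no_branching m0 hm hk hO).
Qed.
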